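(* Let $p$ be a prime with $p\equiv 5\pmod 8$ or $p\equiv 7\pmod 8$, and let $(P_n)_{n\ge0}$ be the Catalan-Larcombe-French numbers. Then $p\mid P_{\frac{p-1}{2}}$.
   Context: The Catalan-Larcombe-French numbers are defined by $P_0=1$, $P_1=8$ and, for $n\ge 2$, $n^2P_n-8(3n^2-3n+1)P_{n-1}+128(n-1)^2P_{n-2}=0$. *)

(* Defs.v *)
From mathcomp Require Import all_boot all_order all_algebra.
Set Implicit Arguments. Unset Strict Implicit. Unset Printing Implicit Defensive.
Import Order.TTheory GRing.Theory Num.Theory.
Local Open Scope ring_scope.

(* Catalan-Larcombe-French numbers, computed in rat via the recurrence
   n^2 P_n = 8(3n^2-3n+1) P_{n-1} - 128 (n-1)^2 P_{n-2}, P_0 = 1, P_1 = 8. *)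
Fixpoint clf_pair (n : nat) : rat * rat :=
  (* returns (P_n, P_{n+1}) *)
  match n with
  | 0%N => (1, 8)
  | k.+1 =>
      let: (a, b) := clf_pair k in
      let m : rat := (k.+2)%:R in
      (b, (8 * (3 * m ^+ 2 - 3 * m + 1) * b - 128 * (m - 1) ^+ 2 * a) / m ^+ 2)
  end.

Definition clf (n : nat) : rat := (clf_pair n).1.

(* Main.v *)
Require Import Defs.
From mathcomp Require Import all_boot all_order all_algebra finfield.
From mathcomp Require Import ring lra zify.
Set Implicit Arguments. Unset Strict Implicit. Unset Printing Implicit Defensive.
Import GRing.Theory Num.Theory.

Definition Fn (n k : nat) : nat := locked ('C(n, k.*2) * 'C(k.*2, k) ^ 2 * 4 ^ (n - k.*2))%N.
Lemma FnE n k : Fn n k = ('C(n, k.*2) * 'C(k.*2, k) ^ 2 * 4 ^ (n - k.*2))%N.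
Proof. by rewrite /Fn -lock. Qed.
Definition Tn (m k : nat) : nat := k.*2.+1 * Fn m k.
Definition Tp (m k : nat) : nat := if k is j.+1 then Tn m j else 0.

Lemma Fn0 n k : n < k.*2 -> Fn n k = 0.
Proof. by move=> h; rewrite FnE bin_small. Qed.

Local Open Scope ring_scope.

Lemma factr_neq0 n : (n`!%:R : rat) != 0.
Proof. by rewrite pnatr_eq0 -lt0n fact_gt0. Qed.

Lemma binE (a b : nat) : ('C(a + b, a)%:R : rat) = (a + b)`!%:R / (a`!%:R * b`!%:R).
Proof.
have := @bin_fact (a+b) a (leq_addr _ _); rewrite addKn => h.
by rewrite -h !natrM mulfK // mulf_neq0 // factr_neq0.
Qed.

Lemma FnR k b : ((Fn (k.*2 + b) k)%:R : rat) =
  (k.*2 + b)`!%:R / ((k.*2)`!%:R * b`!%:R) * ((k.*2)`!%:R / (k`!%:R * k`!%:R)) ^+ 2 * 4 ^+ b.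
Proof. by rewrite FnE addKn !natrM !natrX binE -addnn binE. Qed.

Ltac finish := rewrite !(natrD, natrM, natrX) !FnR ?addn0 ?addn1 ?doubleS ?(addSn, addnS) !factS;
  rewrite -!addnn !(natrD, natrM, natrX);
  rewrite ?exprS; field; rewrite ?(mulf_neq0, factr_neq0) //;
  repeat (apply/andP; split); rewrite ?factr_neq0 //; apply: lt0r_neq0.
Ltac pos j := have := ler0n rat j; lra.

Lemma term_id m k : ((m.+2)^2 * Fn m.+2 k + 32 * (m.+1)^2 * Fn m k + 16 * m.+1 * Tn m k
  = 4 * (3 * m.+2 * m.+1 + 1) * Fn m.+1 k + 16 * m.+1 * Tp m k)%N.
Proof.
apply/eqP; rewrite -(eqr_nat rat); apply/eqP.
rewrite /Tp /Tn; case: k => [|j].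
  rewrite !FnE !bin0 !subn0 !expnS !mul1n.
  rewrite !(natrD, natrM, natrX). ring.
have [lt|le] := ltnP m j.*2.
  rewrite !Fn0 ?muln0 ?addn0 //; rewrite doubleS; lia.
have [r ->] : exists r, m = (j.*2 + r)%N by exists (m - j.*2)%N; rewrite subnKC.
case: r => [|[|s]].
- rewrite [Fn (j.*2 + 0)%N j.+1]Fn0 ?[Fn (j.*2 + 0)%N.+1 j.+1]Fn0 ?doubleS ?addn0 //.
  rewrite [Fn j.*2.+2 _](_ : _ = Fn (((j.+1).*2 + 0))%N j.+1); last by rewrite doubleS addn0.
  rewrite [Fn j.*2 _](_ : _ = Fn ((j.*2 + 0))%N j); last by rewrite addn0.
  finish; pos j.
- rewrite [Fn (j.*2 + 1)%N j.+1]Fn0 ?doubleS ?addn1 //.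
  rewrite [Fn (j.*2.+1).+2 _](_ : _ = Fn (((j.+1).*2 + 1))%N j.+1); last by rewrite doubleS addn1.
  rewrite [Fn (j.*2.+1).+1 _](_ : _ = Fn (((j.+1).*2 + 0))%N j.+1); last by rewrite doubleS addn0.
  rewrite [Fn j.*2.+1 j](_ : _ = Fn ((j.*2 + 1))%N j); last by rewrite addn1.
  finish; pos j.
- rewrite [Fn (j.*2 + s.+2)%N.+2 _](_ : _ = Fn (((j.+1).*2 + s.+2))%N j.+1); last by rewrite doubleS !addnS.
  rewrite [Fn (j.*2 + s.+2)%N.+1 _](_ : _ = Fn (((j.+1).*2 + s.+1))%N j.+1); last by rewrite doubleS !addnS.
  rewrite [Fn (j.*2 + s.+2)%N j.+1](_ : _ = Fn (((j.+1).*2 + s))%N j.+1); last by rewrite doubleS !addnS.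
  finish; have := ler0n rat s; pos j.
Qed.

Definition an (n : nat) : nat := (\sum_(k < n.+1) Fn n k)%N.
Definition Pn (n : nat) : nat := (2 ^ n * an n)%N.

Lemma an_ext n N : (n < N)%N -> (\sum_(k < N) Fn n k)%N = an n.
Proof.
elim: N => // N IH; rewrite ltnS leq_eqVlt => /orP[/eqP->//|h].
by rewrite big_ord_recr /= IH // Fn0 ?addn0 //; lia.
Qed.

Lemma an_rec m : ((m.+2)^2 * an m.+2 + 32 * (m.+1)^2 * an m
  = 4 * (3 * m.+2 * m.+1 + 1) * an m.+1)%N.
Proof.
have H : ((m.+2)^2 * (\sum_(k < m.+3) Fn m.+2 k) + 32 * (m.+1)^2 * (\sum_(k < m.+3) Fn m k)
     + 16 * m.+1 * (\sum_(k < m.+3) Tn m k)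
  = 4 * (3 * m.+2 * m.+1 + 1) * (\sum_(k < m.+3) Fn m.+1 k) + 16 * m.+1 * (\sum_(k < m.+3) Tp m k))%N.
  rewrite !big_distrr -!big_split; apply: eq_bigr => k _; exact: term_id.
have h0 : (m < m.+3)%N by lia.
have h1 : (m.+1 < m.+3)%N by lia.
have h2 : (m.+2 < m.+3)%N by lia.
rewrite (an_ext h0) (an_ext h1) (an_ext h2) in H.
have ET : (\sum_(k < m.+3) Tp m k = \sum_(k < m.+3) Tn m k)%N.
  rewrite big_ord_recl [RHS]big_ord_recr.
  rewrite (_ : Tn m ord_max = 0%N); last by rewrite /Tn Fn0 ?muln0 //=; lia.
  rewrite /= add0n addn0; apply: eq_bigr => i _ //.
by move: H; rewrite ET => /eqP; rewrite eqn_add2r => /eqP.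
Qed.

Lemma Pn_rec m : ((m.+2)^2 * Pn m.+2 + 128 * (m.+1)^2 * Pn m
  = 8 * (3 * m.+2 * m.+1 + 1) * Pn m.+1)%N.
Proof.
have H := an_rec m; rewrite /Pn !expnS.
transitivity (4 * 2^m * ((m.+2)^2 * an m.+2 + 32 * (m.+1)^2 * an m))%N; first ring.
rewrite H; ring.
Qed.



Lemma Pn0 : Pn 0 = 1%N.
Proof. by rewrite /Pn /an big_ord_recr big_ord0 /= FnE. Qed.
Lemma Pn1 : Pn 1 = 8%N.
Proof. by rewrite /Pn /an !big_ord_recr big_ord0 /= !FnE. Qed.

Lemma clf_pairE n : clf_pair n = ((Pn n)%:R, (Pn n.+1)%:R).
Proof.
elim: n => [|k IH]; first by rewrite Pn0 Pn1.
rewrite [clf_pair _]/= IH; congr (_, _).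
have H := Pn_rec k.
have /eqP := congr1 (fun x => x%:R : rat) H.
rewrite !(natrD, natrM, natrX) => /eqP H'.
have nz : (k.+2%:R ^+ 2 : rat) != 0 by rewrite expf_neq0 // pnatr_eq0.
apply: (mulIf nz); rewrite divfK //.
have e2 : (k.+2%:R : rat) = k%:R + 2 by rewrite -addn2 natrD.
have e1 : (k.+1%:R : rat) = k%:R + 1 by rewrite -addn1 natrD.
rewrite e1 e2 in H' *.
rewrite !exprS in H' *.
set a0 := (an k)%:R in H' *. set a1 := (an k.+1)%:R in H' *. set a2 := (an k.+2)%:R in H' *.
set x := (k%:R : rat) in H' *. set t := (2 : rat) ^+ k in H' *.
nra.
Qed.


Section ModP.
Variable p : nat.
Hypothesis pr : prime p.
Local Notation F := ('F_p : fieldType).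

Lemma p0 : (p%:R : F) = 0.
Proof. exact: pchar_Fp_0. Qed.

Lemma natF0 a : (0 < a < p)%N -> (a%:R : F) != 0.
Proof.
case/andP=> a0 ap; apply/eqP=> /(congr1 val); rewrite /= val_Fp_nat // modn_small //.
by move=> h; rewrite h in a0.
Qed.

Lemma natF_dvd a : (a%:R : F) = 0 -> (p %| a)%N.
Proof. by move=> h; rewrite /dvdn -val_Fp_nat // h. Qed.

Lemma dvd_natF0 m : (p %| m)%N -> (m%:R : F) = 0.
Proof. by move/dvdnP=> [c ->]; rewrite natrM p0 mulr0. Qed.

Lemma fermat (a : F) : a != 0 -> a ^+ p.-1 = 1.
Proof.
move=> a0; have := expf_card a; rewrite card_Fp // => h.
have : a ^+ p.-1 * a = 1 * a by rewrite -exprSr prednK ?prime_gt0 // h mul1r.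
exact: mulIf.
Qed.

Lemma natB_F a : (a <= p)%N -> ((p - a)%:R : F) = - a%:R.
Proof.
move=> h; apply/eqP; rewrite -subr_eq0 opprK -natrD subnK // p0 //.
Qed.

Lemma binpm1 i : (i < p)%N -> ('C(p.-1, i)%:R : F) = (-1) ^+ i.
Proof.
elim: i => [|i IH] h; first by rewrite bin0.
have h' : (i < p)%N by lia.
have : (('C(p.-1, i.+1) + 'C(p.-1, i))%:R : F) = 0.
  rewrite -binS prednK ?prime_gt0 //; apply: dvd_natF0; apply: prime_dvd_bin => //; lia.
rewrite natrD => /eqP; rewrite addr_eq0 => /eqP ->.
by rewrite IH // exprS mulN1r.
Qed.

Lemma binN (a b : nat) : ('C((a + b)%N, a)%:R : rat) = ((a + b)%N)`!%:R / (a`!%:R * b`!%:R).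
Proof.
have := @bin_fact (a+b)%N a (leq_addr _ _); rewrite addKn => h.
by rewrite -h !natrM mulfK // mulf_neq0 // factr_neq0.
Qed.

Lemma cent_rec k : (k.+1 * 'C(k.+1.*2, k.+1) = 2 * k.*2.+1 * 'C(k.*2, k))%N.
Proof.
apply/eqP; rewrite -(eqr_nat rat); apply/eqP.
rewrite -!addnn !natrM (binN k.+1 k.+1) (binN k k) !(addSn, addnS) !factS.
rewrite !(natrD, natrM); field.
rewrite factr_neq0 /=; apply: lt0r_neq0; have := ler0n rat k; lra.
Qed.

Variable n : nat.
Hypothesis pn : p = n.*2.+1.

Lemma twon1 : (2 * n%:R + 1 : F) = 0.
Proof. rewrite -p0 pn -addn1 -addnn !natrD; ring. Qed.

Lemma central k : (k <= n)%N -> ('C(k.*2, k)%:R : F) = (-4)^+k * 'C(n,k)%:R.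
Proof.
elim: k => [|k IH] h; first by rewrite !bin0 expr0 mul1r.
have hk : (k.+1%:R : F) != 0 by apply: natF0; lia.
apply: (mulfI hk); rewrite -natrM cent_rec natrM IH; last lia.
rewrite [RHS]mulrCA -natrM mul_bin_left !natrM natrB ?exprS; last lia.
rewrite [(k.*2.+1)%:R](_ : _ = 2 * k%:R + 1 :> F); last by rewrite -addnn; ring.
apply/eqP; rewrite -subr_eq0; apply/eqP.
transitivity ((-4)^+k * 'C(n, k)%:R * 2 * (2 * n%:R + 1) : F); first ring.
by rewrite twon1; ring.
Qed.

Lemma n_gt0 : (0 < n)%N.
Proof. have := prime_gt1 pr; rewrite pn; by case: (n). Qed.

Lemma sum_trunc m N d : (m < N.*2)%N ->
  (\sum_(k < N + d) Fn m k = \sum_(k < N) Fn m k)%N.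
Proof.
move=> h; elim: d => [|d IH]; first by rewrite addn0.
by rewrite addnS big_ord_recr /= IH Fn0 ?addn0 //; lia.
Qed.

Lemma two_neq0 : (2 : F) != 0.
Proof. by apply: (@natF0 2); have := n_gt0; rewrite pn; lia. Qed.

Lemma four_neq0 : (4 : F) != 0.
Proof. by rewrite (_ : 4 = 2 * 2 :> F) ?mulf_neq0 ?two_neq0 //; ring. Qed.

Lemma Pp1 : ((Pn p.-1)%:R : F) = (-1)^+n.
Proof.
have hp1 : p.-1 = (n + n)%N by rewrite pn /= addnn.
rewrite /Pn natrM natrX fermat ?two_neq0 // mul1r.
rewrite /an (_ : p.-1.+1 = n.+1 + n)%N; last by rewrite hp1; lia.
rewrite sum_trunc; last by rewrite hp1; lia.
rewrite natr_sum.
transitivity (\sum_(k < n.+1) ('C(n, k) * 'C(n, n - k))%:R : F).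
  apply: eq_bigr => [[k hk]] _ /=.
  rewrite FnE !natrM !natrX binpm1; last lia.
  rewrite central; last lia.
  rewrite bin_sub; last lia.
  have e1 : (-1 : F) ^+ k.*2 = 1 by rewrite -mul2n exprM sqrrN !expr1n.
  have e2 : ((-4 : F) ^+ k) * (-4) ^+ k * 4 ^+ (p.-1 - k.*2) = 1.
    rewrite -exprD addnn -mul2n exprM sqrrN -exprM mul2n -exprD subnKC; last lia.
    by rewrite fermat ?four_neq0.
  rewrite e1 mul1r; set c := 'C(n, k)%:R.
  transitivity (c * c * ((-4 : F) ^+ k * (-4) ^+ k * 4 ^+ (p.-1 - k.*2))); first ring.
  by rewrite e2 mulr1.
rewrite -natr_sum binomial.Vandermonde -hp1 binpm1 //.
by rewrite pn; lia.
Qed.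

Local Notation fF i := ((i.+1).*2%:R : F).
Local Notation gF i := ((i.*2.+1)%:R : F).

Lemma prod_f k : \prod_(0 <= i < k) fF i = 2 ^+ k * k`!%:R.
Proof.
elim: k => [|k IH]; first by rewrite big_nil expr0 mul1r.
rewrite big_nat_recr //= IH factS natrM exprS -addnn natrD; ring.
Qed.

Lemma prod_fg t : \prod_(0 <= i < t) fF i * \prod_(0 <= i < t) gF i = (t.*2)`!%:R.
Proof.
elim: t => [|t IH]; first by rewrite !big_nil mul1r.
rewrite !big_nat_recr //= doubleS !factS !natrM -IH -!addnn; ring.
Qed.

Lemma prod_m1 u : \prod_(0 <= i < u) (-1 : F) = (-1) ^+ u.
Proof. by elim: u => [|u IH]; rewrite ?big_nil // big_nat_recr //= IH exprSr. Qed.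

Lemma dvd_fact k : (p %| k`!)%N -> (p <= k)%N.
Proof.
elim: k => [|k IH]; first by rewrite Euclid_dvd1.
rewrite factS Euclid_dvdM // => /orP[h|h]; first exact: dvdn_leq.
by have := IH h; lia.
Qed.

Lemma fact_neq0 : (n`!%:R : F) != 0.
Proof. apply/eqP => /natF_dvd /dvd_fact; rewrite pn; lia. Qed.

Lemma two_pow t u : n = (t + u)%N -> (u = t \/ u = t.+1) -> (2 : F) ^+ n = (-1) ^+ u.
Proof.
move=> hn hu.
have key : \prod_(0 <= i < n) fF i = \prod_(0 <= i < t) fF i * ((-1) ^+ u * \prod_(0 <= i < u) gF i).
  rewrite (@big_cat_nat _ _ _ t) //=; last lia.
  congr (_ * _).
  rewrite -{1}[t]add0n big_addn (_ : n - t = u)%N; last lia.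
  rewrite -prod_m1 -big_split /=.
  rewrite [RHS](big_nat_rev _ _ 0 u) /=.
  apply: eq_big_nat => i hi; rewrite add0n mulN1r.
  rewrite -natB_F; last by rewrite pn; lia.
  congr (_%:R); rewrite pn; lia.
rewrite prod_f in key.
apply: (mulIf fact_neq0); rewrite key.
case: hu => hu; rewrite hu in hn *.
  rewrite mulrCA prod_fg hn addnn; ring.
rewrite big_nat_recr //= hn.
set A := \prod_(0 <= i < t) _; set B := \prod_(0 <= i < t) _.
transitivity ((-1) ^+ t.+1 * ((A * B) * (t.*2.+1)%:R) : F); first ring.
by rewrite prod_fg addnS addnn factS natrM; ring.
Qed.

Lemma lin1 (A B C D k : F) : C - D = k * (A - B) -> A = B -> C = D.
Proof. by move=> h e; apply/eqP; rewrite -subr_eq0 h e subrr mulr0. Qed.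

Lemma lin4 (A1 B1 A2 B2 A3 B3 A4 B4 C D k1 k2 k3 k4 : F) :
  C - D = k1 * (A1 - B1) + k2 * (A2 - B2) + k3 * (A3 - B3) + k4 * (A4 - B4) ->
  A1 = B1 -> A2 = B2 -> A3 = B3 -> A4 = B4 -> C = D.
Proof.
by move=> h e1 e2 e3 e4; apply/eqP; rewrite -subr_eq0 h e1 e2 e3 e4 !subrr !mulr0 !addr0.
Qed.

Local Notation xF i := ((Pn i)%:R : F).

Lemma recF m : (m.+2%:R)^+2 * xF m.+2 + 128 * (m.+1%:R)^+2 * xF m
  = 8 * (3 * m.+2%:R * m.+1%:R + 1) * xF m.+1.
Proof.
move: (Pn_rec m); move: (Pn m.+2) (Pn m.+1) (Pn m) => a b c h.
have := congr1 (fun z => z%:R : F) h; rewrite !(natrD, natrM, natrX) /=.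
by move=> H; exact H.
Qed.

Lemma sym j : (j.+1 < p)%N -> xF (p.-1 - j) * 128 ^+ j = xF p.-1 * xF j
   /\ xF (p.-1 - j.+1) * 128 ^+ j.+1 = xF p.-1 * xF j.+1.
Proof.
have p3 : (2 < p)%N by have := n_gt0; rewrite pn; lia.
elim: j => [|j IH] h.
  split; first by rewrite subn0 expr0 mulr1 Pn0 mulr1.
  have R := recF p.-2.
  rewrite (_ : p.-2.+2 = p)%N in R; last lia.
  rewrite (_ : p.-2.+1 = p.-1)%N in R; last lia.
  have e1 : ((p.-1)%:R : F) = -1 by rewrite -subn1 natB_F //; lia.
  rewrite p0 e1 in R.
  rewrite Pn1 (_ : p.-1 - 1 = p.-2)%N; last lia.
  apply: (lin1 (k := 1) _ R); ring.
have [Sj Sj1] := IH (ltnW h); split=> //.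
have R1 := recF (p.-1 - j.+2).
rewrite (_ : (p.-1 - j.+2).+2 = p.-1 - j)%N in R1; last lia.
rewrite (_ : (p.-1 - j.+2).+1 = p.-1 - j.+1)%N in R1; last lia.
have c1 : ((p.-1 - j)%:R : F) = - (j.+1)%:R.
  by rewrite (_ : p.-1 - j = p - j.+1)%N ?natB_F //; lia.
have c2 : ((p.-1 - j.+1)%:R : F) = - (j.+2)%:R.
  by rewrite (_ : p.-1 - j.+1 = p - j.+2)%N ?natB_F //; lia.
rewrite c1 c2 in R1.
have R2 := recF j.
have nz : ((j.+2)%:R ^+ 2 : F) != 0 by rewrite expf_neq0 // natF0 //; lia.
apply: (mulfI nz).
rewrite !exprS in Sj1 *.
apply: (lin4 (k1 := 128 * 128 ^+ j) (k2 := -128 * (j.+1%:R)^+2)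
   (k3 := 8 * (3 * j.+2%:R * j.+1%:R + 1)) (k4 := - xF p.-1) _ R1 Sj Sj1 R2).
ring.
Qed.

End ModP.


Theorem corollary6 (p : nat) :
  prime p -> (p %% 8 = 5 \/ p %% 8 = 7)%N ->
  exists m : int, clf ((p - 1) %/ 2) = m%:~R /\ (p%:Z %| m)%Z.
Proof.
move=> pr hp.
set n := ((p - 1) %/ 2)%N.
have pn : p = n.*2.+1 by rewrite /n; lia.
exists (Pn n)%:Z; split.
  by rewrite /clf clf_pairE /= pmulrn.
suff h : (p %| Pn n)%N by [].
apply: (natF_dvd pr).
have hn1 : (n.+1 < p)%N by have := n_gt0 pr pn; lia.
have [S _] := sym pr pn hn1.
rewrite (_ : p.-1 - n = n)%N in S; last lia.
rewrite (Pp1 pr pn) in S.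
have e128 : (128 : 'F_p) ^+ n = ((2 : 'F_p) ^+ n) ^+ 7.
  by rewrite -exprM mulnC exprM; congr (_ ^+ _); ring.
set q := (p %/ 8)%N.
have fin : forall a b : 'F_p, a != b -> (Pn n)%:R * a = b * (Pn n)%:R -> ((Pn n)%:R : 'F_p) = 0.
  move=> a b ab e.
  have : ((Pn n)%:R : 'F_p) * (a - b) = 0 by rewrite mulrBr e mulrC subrr.
  by move/eqP; rewrite mulf_eq0 subr_eq0 (negPf ab) orbF => /eqP.
have two : (2 : 'F_p) != 0 by apply: (two_neq0 pr pn).
have odd1 : forall k, ((-1 : 'F_p) ^+ (k.*2.+1)) = -1.
  by move=> k; rewrite exprS -mul2n exprM sqrrN !expr1n mulr1.
have even1 : forall k, ((-1 : 'F_p) ^+ (k.*2)) = 1.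
  by move=> k; rewrite -mul2n exprM sqrrN !expr1n.
have e7 : ((-1 : 'F_p)) ^+ 7 = -1 by exact: (odd1 3%N).
case: hp => hp.
- have hu := two_pow pr pn (t := q.*2.+1) (u := q.*2.+1).
  rewrite hu in e128; [|rewrite /n; lia|by left].
  rewrite odd1 e7 in e128.
  have mn : ((-1 : 'F_p) ^+ n) = 1.
    by rewrite (_ : n = (q.*2.+1).*2)%N ?even1 //; rewrite /n; lia.
  rewrite e128 mn in S.
  apply: (fin _ _ _ S).
  apply/eqP => h; move: two; rewrite (_ : 2 = 1 - -1 :> 'F_p); last ring.
  by rewrite h subrr eqxx.
- have hu := two_pow pr pn (t := q.*2.+1) (u := q.*2.+2).
  rewrite hu in e128; [|rewrite /n; lia|by right].
  rewrite (_ : q.*2.+2 = (q.+1).*2)%N ?even1 ?expr1n in e128; last by rewrite doubleS.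
  have mn : ((-1 : 'F_p) ^+ n) = -1.
    by rewrite (_ : n = (q.*2.+1).*2.+1)%N ?odd1 //; rewrite /n; lia.
  rewrite e128 mn in S.
  apply: (fin _ _ _ S).
  apply/eqP => h; move: two; rewrite (_ : 2 = 1 - -1 :> 'F_p); last ring.
  by rewrite -h subrr eqxx.
Qed.
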